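(* Let $f,g\in Sym$ be symmetric functions of degree at most a positive integer $n$. If $f[\Xi_\mu]=g[\Xi_\mu]$ for all partitions $\mu$ with $|\mu|\le n$, then $f=g$ in $Sym$.
   Context: $Sym=\mathbb{Q}[p_1,p_2,\ldots]$ graded by $\deg p_k=k$. For $f\in Sym$ and a partition $\mu$, $f[\Xi_\mu]$ denotes $f$ evaluated at the multiset of eigenvalues of a permutation matrix of cycle type $\mu$, i.e. $p_k\mapsto\sum_i\sum_{j=0}^{\mu_i-1}e^{2\pi i jk/\mu_i}=\sum_{d\mid k}d\,m_d(\mu)$, with $m_d(\mu)$ the number of parts of $\mu$ equal to $d$ (for $\mu$ the empty partition all $p_k\mapsto0$). *)

(* Defs.v *)
From HB Require Import structures.
From mathcomp Require Import all_boot all_order all_algebra.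
From mathcomp Require Export mpoly.
From mathcomp Require Export all_boot all_order all_algebra.
Set Implicit Arguments. Unset Strict Implicit. Unset Printing Implicit Defensive.
Import GRing.Theory.
Local Open Scope ring_scope.

(* An element of Sym = Q[p_1,p_2,...] involves only finitely many p_k, so it is
   an element of {mpoly rat[N]} for some N, where the variable 'X_i (i : 'I_N)
   stands for p_(i+1).  The inclusions {mpoly rat[N]} -> {mpoly rat[N']} are
   injective, so equality in Sym is equality in any such ring. *)

Definition wdeg (N : nat) (m : 'X_{1..N}) : nat := (\sum_(i < N) (i.+1 * m i))%N.

Definition sym_deg_le (N n : nat) (f : {mpoly rat[N]}) : Prop :=
  forall m : 'X_{1..N}, m \in msupp f -> (wdeg m <= n)%N.

(* partitions: finite lists of positive parts; |mu| = sumn mu *)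
Definition is_partition (mu : seq nat) : bool := all (fun x => 0 < x)%N mu.

Definition p_at_Xi (mu : seq nat) (k : nat) : rat :=
  (\sum_(d <- divisors k) d * count_mem d mu)%N%:R.

Definition eval_Xi (N : nat) (f : {mpoly rat[N]}) (mu : seq nat) : rat :=
  f.@[fun i : 'I_N => p_at_Xi mu i.+1].

(* Main.v *)
Require Import Defs.
From mathcomp Require Import zify.
Import GRing.Theory Num.Theory.
Local Open Scope ring_scope.

Lemma pX_small t K mu i : (0 < i <= K)%N ->
  p_at_Xi (nseq t K.+1 ++ mu) i = p_at_Xi mu i.
Proof.
move=> /andP[i0 iK]; rewrite /p_at_Xi; congr (_%:R).
apply: eq_big_seq => d; rewrite -dvdn_divisors // => di.
rewrite count_cat count_nseq /=.
have dle : (d <= i)%N by apply: dvdn_leq.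
have -> : (K.+1 == d) = false by apply/eqP; lia.
by rewrite mul0n add0n.
Qed.

Lemma pX_top t K mu :
  p_at_Xi (nseq t K.+1 ++ mu) K.+1 = p_at_Xi mu K.+1 + (t * K.+1)%:R.
Proof.
rewrite /p_at_Xi -natrD; congr (_%:R).
under eq_bigr do rewrite count_cat count_nseq mulnDr.
rewrite big_split addnC; congr addn.
rewrite (bigD1_seq K.+1); last exact: divisors_uniq.
  change (K.+1 * (pred1 K.+1 K.+1 * t) + \sum_(i <- divisors K.+1 | i != K.+1) (i * (pred1 i K.+1 * t)) = t * K.+1)%N.
  rewrite (_ : pred1 K.+1 K.+1 = true); last exact: eqxx.
  rewrite mul1n big1_seq; first by rewrite addn0 mulnC.
  move=> d /andP[dK _].
  rewrite (_ : pred1 d K.+1 = false); first by rewrite mul0n muln0.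
  by apply/negbTE; rewrite /pred1 /= eq_sym.
rewrite -dvdn_divisors; [exact: dvdnn | by []].
Qed.
Definition Ev {N} (s : seq 'X_{1..N}) (c : 'X_{1..N} -> rat) (mu : seq nat) : rat :=
  \sum_(m <- s) c m * \prod_(i < N) (p_at_Xi mu i.+1) ^+ m i.

Definition mz {N} (k : 'I_N) (m : 'X_{1..N}) : 'X_{1..N} :=
  [multinom (if i == k then 0%N else m i) | i < N].
Definition ek {N} (k : 'I_N) (J : nat) : 'X_{1..N} :=
  [multinom (if i == k then J else 0%N) | i < N].
Definition sJ {N} (k : 'I_N) (s : seq 'X_{1..N}) (J : nat) := [seq mz k m | m : 'X_{1..N} <- s & (m k == J)%N].
Definition cJ {N} (k : 'I_N) (c : 'X_{1..N} -> rat) J := fun m' => c (m' + ek k J)%MM.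

Lemma F1 N (k : 'I_N) m : (mz k m + ek k (m k))%MM = m.
Proof.
apply/mnmP => i; rewrite mnmDE !mnmE.
by case: eqP => [->|]; rewrite ?add0n ?addn0.
Qed.

Lemma F2 N (k : 'I_N) (x : 'I_N -> rat) (m : 'X_{1..N}) :
  \prod_(i < N) x i ^+ m i = (\prod_(i < N) x i ^+ (mz k m) i) * x k ^+ m k.
Proof.
rewrite (bigD1 k) // [X in _ = X * _](bigD1 k) //= mnmE eqxx expr0 mul1r mulrC.
congr (_ * _); apply: eq_bigr => i /negbTE ik; by rewrite mnmE ik.
Qed.

Lemma F3 N (k : 'I_N) (m : 'X_{1..N}) :
  wdeg m = (wdeg (mz k m) + k.+1 * m k)%N.
Proof.
rewrite /wdeg (bigD1 k) // [X in _ = (X + _)%N](bigD1 k) //= mnmE eqxx muln0 add0n addnC.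
congr (_ + _)%N; apply: eq_bigr => i /negbTE ik; by rewrite mnmE ik.
Qed.

Lemma Ev_sJ N (k : 'I_N) (s : seq 'X_{1..N}) c (J : nat) mu :
  Ev (sJ k s J) (cJ k c J) mu =
  \sum_(m <- s | m k == J) c m * \prod_(i < N) (p_at_Xi mu i.+1) ^+ (mz k m) i.
Proof.
rewrite /Ev /sJ big_map big_filter; apply: eq_bigr => m /eqP mk.
by rewrite /cJ -mk F1.
Qed.

Lemma F4 N (k : 'I_N) (s : seq 'X_{1..N}) c mu n : (forall m, m \in s -> (m k <= n)%N) ->
  Ev s c mu = \sum_(j < n.+1) Ev (sJ k s j) (cJ k c j) mu * (p_at_Xi mu k.+1) ^+ j.
Proof.
move=> hs.
under [RHS]eq_bigr do rewrite Ev_sJ mulr_suml.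
rewrite (exchange_big_dep xpredT) //= /Ev big_seq [RHS]big_seq.
apply: eq_bigr => m ms.
have mk : (m k < n.+1)%N by rewrite ltnS hs.
rewrite (big_pred1 (Ordinal mk)); last by move=> j; rewrite /= eq_sym.
by rewrite /= -mulrA -F2.
Qed.

Definition okK K (mu : seq nat) := all (fun x => 0 < x <= K)%N mu.

Definition KeyP N K := forall n (s : seq 'X_{1..N}) c,
  (forall m, m \in s -> (wdeg m <= n)%N /\ forall i : 'I_N, (K <= i)%N -> m i = 0%N) ->
  (forall mu, okK K mu -> (sumn mu <= n)%N -> Ev s c mu = 0) ->
  forall m, m \in s -> c m = 0.

Lemma F6 N (k : 'I_N) (s : seq 'X_{1..N}) c (J : nat) t mu :
  (forall m, m \in s -> forall i : 'I_N, (k.+1 <= i)%N -> m i = 0%N) ->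
  Ev (sJ k s J) (cJ k c J) (nseq t k.+1 ++ mu) = Ev (sJ k s J) (cJ k c J) mu.
Proof.
move=> hs; apply: eq_big_seq => m' /mapP [m0]; rewrite mem_filter => /andP[_ m0s] ->.
congr (_ * _); apply: eq_bigr => i _; rewrite mnmE.
case: (eqVneq i k) => [//|ik].
case: (ltnP i k) => [ik' | ki].
  by rewrite pX_small //; apply/andP; split.
rewrite hs //; rewrite ltn_neqAle ki andbT; by rewrite eq_sym.
Qed.

Lemma step N (k : 'I_N) : KeyP N k -> KeyP N k.+1.
Proof.
move=> IH n s c hs hv.
have hk : forall m, m \in s -> (k.+1 * m k <= n)%N.
  move=> m ms; have := F3 _ k m; have := (hs m ms).1; lia.
have hmk : forall m, m \in s -> (m k <= n)%N.
  move=> m ms; have := hk m ms; lia.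
have hs2 : forall m, m \in s -> forall i : 'I_N, (k.+1 <= i)%N -> m i = 0%N.
  by move=> m ms; exact: (hs m ms).2.
pose C J := forall m, m \in s -> (J <= m k)%N -> c m = 0.
have Cn : C n.+1 by move=> m ms; rewrite ltnNge hmk.
have CS : forall J, C J.+1 -> C J.
  move=> J CJ m ms; rewrite leq_eqVlt => /orP [/eqP Jm | ]; last exact: CJ.
  have hJ : (k.+1 * J <= n)%N by rewrite Jm hk.
  have -> : c m = cJ k c J (mz k m) by rewrite /cJ Jm F1.
  have Hh : forall m', m' \in sJ k s J ->
      (wdeg m' <= n - k.+1 * J)%N /\ forall i : 'I_N, (k <= i)%N -> m' i = 0%N.
    move=> m'; rewrite /sJ => /mapP [m0]; rewrite mem_filter => /andP[/eqP m0k m0s] ->.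
    split.
      have := F3 _ k m0; have := (hs m0 m0s).1; rewrite m0k; lia.
    move=> i ki; rewrite mnmE; case: eqP => // /eqP ik; apply: hs2 => //.
    by rewrite ltn_neqAle ki andbT eq_sym.
  apply: (IH (n - k.+1 * J)%N (sJ k s J) (cJ k c J) Hh); last first.
    by rewrite /sJ; apply/mapP; exists m; rewrite // mem_filter Jm eqxx.
  move=> mu okmu smu.
  pose a j := Ev (sJ k s j) (cJ k c j) mu.
  pose P := p_at_Xi mu k.+1.
  have aJ : forall j, (J < j)%N -> a j = 0.
    move=> j Jj; rewrite /a /Ev big1_seq // => m' /andP[_ /mapP [m0]].
    rewrite mem_filter => /andP[/eqP m0k m0s] ->.
    by rewrite /cJ -m0k F1 CJ ?mul0r // m0k.
  have roots : forall t, (t <= J)%N ->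
      \sum_(j < J.+1) a j * (P + (t * k.+1)%:R) ^+ j = 0.
    move=> t tJ.
    have okt : okK k.+1 (nseq t k.+1 ++ mu).
      rewrite /okK all_cat; apply/andP; split.
        by apply/allP => x /nseqP [-> _]; rewrite /= leqnn.
      apply: sub_all okmu => x /andP [x0 xk]; rewrite x0 /=; exact: leqW.
    have st : (sumn (nseq t k.+1 ++ mu) <= n)%N.
      rewrite sumn_cat sumn_nseq.
      have : (t * k.+1 <= J * k.+1)%N by rewrite leq_mul2r tJ orbT.
      move: smu hJ; lia.
    have := hv _ okt st; rewrite (F4 _ k _ _ _ _ hmk).
    under eq_bigr do rewrite F6 // pX_top.
    move=> H0; rewrite (big_ord_widen n.+1 (fun j => a j * (P + (t * k.+1)%:R) ^+ j)); last first.
      move: hJ; lia.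
    rewrite big_mkcond -[RHS]H0; apply: eq_bigr => j _.
    by case: ifP => // /negbT; rewrite -leqNgt => /aJ; rewrite /a => ->; rewrite mul0r.
  pose Q := \poly_(j < J.+1) a j.
  have Q0 : Q = 0.
    apply/eqP; apply/negPn/negP => Qn0.
    pose rs := map (fun t => P + (t * k.+1)%:R) (iota 0 J.+1).
    have := max_poly_roots Qn0.
    move=> /(_ rs).
    have hsz : size rs = J.+1 by rewrite size_map size_iota.
    have sQ : (size Q <= J.+1)%N by apply: size_poly.
    have H1 : all (root Q) rs.
      apply/allP => x /mapP [t]; rewrite mem_iota => /andP [_ tJ] ->.
      by rewrite /root horner_poly roots.
    have H2 : uniq rs.
      rewrite map_inj_uniq ?iota_uniq // => t1 t2 /addrI /eqP.
      by rewrite eqr_nat eqn_mul2r /= => /eqP.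
    move=> /(_ H1 H2); clearbody rs Q; rewrite hsz => h; move: (leq_trans h sQ); by rewrite ltnn.
  have := congr1 (fun q : {poly rat} => q`_J) Q0.
  rewrite /= /Q coef_poly ltnSn coef0 => aJ0.
  exact: aJ0.
have C0 : forall d, C (n.+1 - d)%N.
  elim=> [|d IHd]; first by rewrite subn0.
  case: (leqP d n) => dn.
    by apply: CS; rewrite subnSK.
  have e1 : (n.+1 - d.+1 = 0)%N by lia.
  have e2 : (n.+1 - d = 0)%N by lia.
  by rewrite e1; rewrite e2 in IHd.
move=> m ms; have := C0 n.+1; rewrite subnn => H; exact: H m ms (leq0n _).
Qed.

Lemma key0 N : KeyP N 0.
Proof.
move=> n s c hs hv.
have m0 : forall m, m \in s -> m = 0%MM.
  by move=> m /hs [_ h]; apply/mnmP => i; rewrite mnm0E h.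
have := hv [::] erefl (leq0n n); rewrite /Ev.
rewrite (eq_big_seq (fun _ => c 0%MM)); last first.
  move=> m /m0 ->; rewrite big1 ?mulr1 // => i _; by rewrite mnm0E expr0.
rewrite big_const_seq count_predT => /eqP.
rewrite iter_addr_0 mulrn_eq0 => /orP [|/eqP c0 m ms]; last by rewrite (m0 m ms).
by move=> /eqP /size0nil s0 m; rewrite s0.
Qed.

Lemma keyall N : forall K, (K <= N)%N -> KeyP N K.
Proof.
elim=> [_|K IHK KN]; first exact: key0.
exact: (step _ (Ordinal KN) (IHK (ltnW KN))).
Qed.

Theorem proposition54 (N n : nat) (f g : {mpoly rat[N]}) :
  (0 < n)%N ->
  sym_deg_le n f -> sym_deg_le n g ->
  (forall mu : seq nat, is_partition mu -> (sumn mu <= n)%N ->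
     eval_Xi f mu = eval_Xi g mu) ->
  f = g.
Proof.
move=> _ hf hg he.
apply/eqP; rewrite -subr_eq0; apply/eqP.
apply/mpolyP => m; rewrite mcoeff0.
case: (boolP (m \in msupp (f - g))) => [mh|]; last exact: memN_msupp_eq0.
apply: (@keyall N N (leqnn N) n (msupp (f - g)) (fun m => (f - g)@_m)) mh.
  move=> m' /msuppB_le; rewrite mem_cat => hm; split.
    by case/orP: hm => [/hf|/hg].
  by move=> i; rewrite leqNgt ltn_ord.
move=> mu okmu smu.
have pmu : is_partition mu.
  by apply: sub_all okmu => x /andP[].
rewrite /Ev -mevalE mevalB.
by have := he mu pmu smu; rewrite /eval_Xi => ->; rewrite subrr.
Qed.
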